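(* Let $n=2m+1\ge3$, $I\subset\{0,\dots,m\}$ nonempty, $d\in\mathbb Z$, and let $(v_i)_{i\in n\mathbb Z\pm I}$ be a $d$-face of type $I$ with associated vectors $\mu_i=v_i-\omega_i$. Then for every $i\in I$, $d\le\mu_i(j)+\mu_i(j^* )\le d+1$ for all $j\in A_i$, and $d-1\le\mu_i(j)+\mu_i(j^* )\le d$ for all $j\in B_i$, where $j^*=n+1-j$, $A_i=\{1,2,\dots,i\}\cup\{i^*,i^*+1,\dots,n\}$ and $B_i=\{i+1,i+2,\dots,n-i\}$.
   Context: For $v\in\mathbb Z^n$ write $v(j)$ for its $j$-th entry, $\Sigma v$ for the sum of its entries, $v^*$ for the vector with $v^*(j)=v(n+1-j)$, $\mathbf d=(d,\dots,d)$, and $v\ge w$ if $v(j)\ge w(j)$ for all $j$. The index set $n\mathbb Z\pm I$ is the set of integers congruent mod $n$ to an element of $I\cup(-I)$. A $d$-face of type $I$ is a family $(v_i)_{i\in n\mathbb Z\pm I}$ of vectors in $\mathbb Z^n$ with: (F1) $v_{i+n}=v_i-\mathbf 1$; (F2) $v_i\ge v_j$ whenever $i\le j$; (F3) $\Sigma v_i-\Sigma v_j=j-i$; (F4) $v_i+v_{-i}^*=\mathbf d$, for all indices $i,j$ in $n\mathbb Z\pm I$. For $i=nb+c$ with $b\in\mathbb Z$, $0\le c<n$, $\omega_i=((-1)^{(c)},0^{(n-c)})-\mathbf b$, where $(x^{(p)},y^{(q)})$ denotes $x$ repeated $p$ times followed by $y$ repeated $q$ times. *)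

(* Defs.v *)
From HB Require Import structures.
From mathcomp Require Import all_boot all_order all_algebra.
Set Implicit Arguments. Unset Strict Implicit. Unset Printing Implicit Defensive.
Import Order.TTheory GRing.Theory Num.Theory.
Local Open Scope ring_scope.

(* Vectors in Z^n are functions 'I_n -> int; the paper's 1-based entry v(j)
   (1 <= j <= n) is  v (j-1)  here.  The reversal v^* is v \o rev_ord. *)
Definition vec (n : nat) := 'I_n -> int.

Definition vsum n (v : vec n) : int := \sum_(j < n) v j.

Definition in_idx (n : nat) (I : pred nat) (i : int) : Prop :=
  exists k : nat, I k /\ ((i - k%:Z)%Z %% n%:Z = 0 \/ (i + k%:Z)%Z %% n%:Z = 0)%Z.

Definition is_face (n : nat) (I : pred nat) (d : int) (v : int -> vec n) : Prop :=
  (* F1 *) (forall i, in_idx n I i -> forall j, v (i + n%:Z) j = v i j - 1) /\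
  (* F2 *) (forall i k, in_idx n I i -> in_idx n I k -> i <= k ->
              forall j, v k j <= v i j) /\
  (* F3 *) (forall i k, in_idx n I i -> in_idx n I k -> vsum (v i) - vsum (v k) = k - i) /\
  (* F4 *) (forall i, in_idx n I i -> forall j, v i j + v (- i) (rev_ord j) = d).

(* omega_i for i = n b + c, 0 <= c < n:  ((-1)^(c), 0^(n-c)) - (b,...,b) *)
Definition omega (n : nat) (i : int) : vec n :=
  fun j => (if (j%:Z < (i %% n%:Z)%Z) then -1 else 0) - (i %/ n%:Z)%Z.

Definition mu (n : nat) (v : int -> vec n) (i : int) : vec n :=
  fun j => v i j - @omega n i j.

(* Main.v *)
Require Import Defs.
From HB Require Import structures.
From mathcomp Require Import all_boot all_order all_algebra.
From mathcomp Require Import zify.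
Import Order.TTheory GRing.Theory Num.Theory.
Local Open Scope ring_scope.

Theorem lemma5p3p4 (m : nat) (I : pred nat) (d : int)
    (v : int -> vec (m.*2.+1)) :
  (1 <= m)%N ->
  (forall k, I k -> (k <= m)%N) ->
  (exists k, I k) ->
  is_face I d v ->
  forall i : nat, I i ->
    (forall j : 'I_(m.*2.+1), ((j < i)%N || (m.*2.+1 - i <= j)%N) ->
       d <= mu v i%:Z j + mu v i%:Z (rev_ord j) <= d + 1) /\
    (forall j : 'I_(m.*2.+1), ((i <= j)%N && (j < m.*2.+1 - i)%N) ->
       d - 1 <= mu v i%:Z j + mu v i%:Z (rev_ord j) <= d).
Proof.
move=> m1 Ibd _ [F1 [F2 [_ F4]]] i Ii.
have Hi := Ibd i Ii.
have idx_i : in_idx m.*2.+1 I i%:Z.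
  by exists i; split => //; left; rewrite subrr mod0z.
have idx_mi : in_idx m.*2.+1 I (- i%:Z).
  by exists i; split => //; right; rewrite addNr mod0z.
have idx_mn : in_idx m.*2.+1 I (- i%:Z + (m.*2.+1)%:Z).
  by exists i; split => //; right; rewrite addrAC addNr add0r modzz.
have Hle1 : (- i%:Z <= i%:Z)%R by lia.
have Hle2 : (i%:Z <= - i%:Z + (m.*2.+1)%:Z)%R by lia.
have key : forall j, v i%:Z j <= v (- i%:Z) j /\ v (- i%:Z) j - 1 <= v i%:Z j.
  move=> j; split; first exact: F2.
  by rewrite -F1 //; apply: F2.
have mod_i : (i%:Z %% (m.*2.+1)%:Z)%Z = i%:Z by apply: modz_small; lia.
have div_i : (i%:Z %/ (m.*2.+1)%:Z)%Z = 0 by apply: divz_small; lia.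
have om : forall j : 'I_(m.*2.+1), omega i%:Z j = if (j < i)%N then -1 else 0.
  move=> j; rewrite /omega mod_i div_i subr0 ltz_nat //.
have E : forall j : 'I_(m.*2.+1),
   mu v i%:Z j + mu v i%:Z (rev_ord j) =
   d + (v i%:Z j - v (- i%:Z) j) - omega i%:Z j - omega i%:Z (rev_ord j).
  move=> j; rewrite /mu.
  have h1 := F4 _ idx_i j.
  have h2 := F4 _ idx_i (rev_ord j); rewrite rev_ordK in h2.
  lia.
have Ha : forall x y : int, x <= y -> y - 1 <= x ->
    d <= d + (x - y) + 1 <= d + 1 /\ d - 1 <= d + (x - y) <= d.
  by move=> x y h1 h2; split; lia.
split=> j Hj; rewrite E !om /=; have [k1 k2] := key j;
  have [lo1 lo2] := Ha _ _ k1 k2;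
  clear E om key F1 F2 F4 idx_i idx_mi idx_mn mod_i div_i Ha.
- have : ((j < i)%N && ~~ (m.*2.+1 - j.+1 < i)%N) ||
         (~~ (j < i)%N && (m.*2.+1 - j.+1 < i)%N).
    move: (ltn_ord j) Hj Hi; clear; lia.
  case/orP=> /andP[h1 h2].
    by rewrite h1 (negbTE h2); rewrite opprK subr0.
  by rewrite (negbTE h1) h2 subr0 opprK.
- have : ~~ (j < i)%N && ~~ (m.*2.+1 - j.+1 < i)%N.
    move: (ltn_ord j) Hj Hi; clear; lia.
  case/andP=> h1 h2; rewrite (negbTE h1) (negbTE h2) !subr0; lia.
Qed.
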